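(* Let $f:\mathbb F_2^5\to\mathbb F_2$ be $f(x_1,\dots,x_5)=x_1\oplus x_5\oplus x_3(x_2\oplus x_4\oplus x_5)$. Let $r,m$ be even, $n=r+m$, let $a,h_1,h_2:\mathbb F_2^r\to\mathbb F_2$ and $g_1,g_2:\mathbb F_2^m\to\mathbb F_2$, and define $\mathfrak f(x,y)=f(a(x),h_1(x),h_2(x),g_1(y),g_2(y))$ for $(x,y)\in\mathbb F_2^r\times\mathbb F_2^m$. (i) If the four functions $a\oplus c_1h_1\oplus c_2h_2$, $(c_1,c_2)\in\mathbb F_2^2$, are all bent and $g_1,g_2$ are bent, then $W_{\mathfrak f}(u,v)\in\{0,\pm2^{n/2},\pm2^{(n+2)/2}\}$ for all $(u,v)$. (ii) Let $r\ge6$. If $a$ is $4$-plateaued, $a\oplus c_1h_1\oplus c_2h_2$ is $2$-plateaued for every $(c_1,c_2)\ne(0,0)$, the four functions $a\oplus c_1h_1\oplus c_2h_2$, $(c_1,c_2)\in\mathbb F_2^2$, have pairwise disjoint Walsh supports, and $g_1,g_2$ are bent, then $W_{\mathfrak f}(u,v)\in\{0,\pm2^{n/2},\pm2^{(n+2)/2}\}$ for all $(u,v)$.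
   Context: $W_h(\omega)=\sum_x(-1)^{h(x)\oplus\omega\cdot x}$, Walsh support $S_h=\{\omega:W_h(\omega)\ne0\}$. For even $m$, $g$ is bent if $|W_g(\omega)|=2^{m/2}$ for all $\omega$. A function $h$ on $\mathbb F_2^r$ is $s$-plateaued if $W_h(\omega)\in\{0,\pm2^{(r+s)/2}\}$ for all $\omega$. *)

(* Defs.v *)
(* F_2 is modelled by bool (xor = addition, && = product);
   F_2^k is {ffun 'I_k -> bool}. Walsh values are integers. *)
From mathcomp Require Import all_boot all_order all_algebra.
Set Implicit Arguments. Unset Strict Implicit. Unset Printing Implicit Defensive.
Import GRing.Theory Num.Theory.
Local Open Scope ring_scope.

Definition vec (k : nat) := {ffun 'I_k -> bool}.

Definition dotp (k : nat) (w x : vec k) : bool :=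
  \big[xorb/false]_(i < k) (w i && x i).

Definition sgnb (b : bool) : int := if b then -1 else 1.

Definition walsh (k : nat) (h : vec k -> bool) (w : vec k) : int :=
  \sum_(x : vec k) sgnb (xorb (h x) (dotp w x)).

Definition walsh2 (r m : nat) (F : vec r -> vec m -> bool) (u : vec r) (v : vec m) : int :=
  \sum_(x : vec r) \sum_(y : vec m) sgnb (xorb (F x y) (xorb (dotp u x) (dotp v y))).

Definition wsupp (k : nat) (h : vec k -> bool) : {set vec k} :=
  [set w | walsh h w != 0].

Definition bent (k : nat) (h : vec k -> bool) : Prop :=
  forall w, `|walsh h w| = (2 ^ (k %/ 2))%:Z.

(* s-plateaued: W_h(w) in {0, +-2^((k+s)/2)} for all w (used with k+s even) *)
Definition plateaued (k s : nat) (h : vec k -> bool) : Prop :=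
  forall w, walsh h w = 0 \/ walsh h w = (2 ^ ((k + s) %/ 2))%:Z
            \/ walsh h w = - (2 ^ ((k + s) %/ 2))%:Z.

Definition f5 (x1 x2 x3 x4 x5 : bool) : bool :=
  xorb (xorb x1 x5) (x3 && xorb (xorb x2 x4) x5).

Definition comb (r : nat) (a h1 h2 : vec r -> bool) (c1 c2 : bool) : vec r -> bool :=
  fun x => xorb (xorb (a x) (c1 && h1 x)) (c2 && h2 x).

Definition frakf (r m : nat) (a h1 h2 : vec r -> bool) (g1 g2 : vec m -> bool)
  : vec r -> vec m -> bool :=
  fun x y => f5 (a x) (h1 x) (h2 x) (g1 y) (g2 y).

Definition five_valued (n : nat) (W : int) : Prop :=
  W = 0 \/ W = (2 ^ (n %/ 2))%:Z \/ W = - (2 ^ (n %/ 2))%:Z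
  \/ W = (2 ^ ((n + 2) %/ 2))%:Z \/ W = - (2 ^ ((n + 2) %/ 2))%:Z.

(* Main.v *)
Require Import Defs.
From mathcomp Require Import all_boot all_order all_algebra zify.
Import GRing.Theory Num.Theory.
Local Open Scope ring_scope.
Lemma pw r m (a h1 h2 : vec r -> bool) (g1 g2 : vec m -> bool) x y U V :
  2 * sgnb (xorb (frakf a h1 h2 g1 g2 x y) (xorb U V)) =
  (sgnb (xorb (comb a h1 h2 false false x) U) + sgnb (xorb (comb a h1 h2 false true x) U)) * sgnb (xorb (g2 y) V)
  + (sgnb (xorb (comb a h1 h2 true false x) U) - sgnb (xorb (comb a h1 h2 true true x) U)) * sgnb (xorb (g1 y) V).
Proof. rewrite /frakf /comb /f5 /sgnb.
move: (a x) (h1 x) (h2 x) (g1 y) (g2 y) U V; do 7! case; simpl; lia.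
Qed.
Lemma decomp r m (a h1 h2 : vec r -> bool) (g1 g2 : vec m -> bool) u v :
  2 * walsh2 (frakf a h1 h2 g1 g2) u v =
  (walsh (comb a h1 h2 false false) u + walsh (comb a h1 h2 false true) u) * walsh g2 v
  + (walsh (comb a h1 h2 true false) u - walsh (comb a h1 h2 true true) u) * walsh g1 v.
Proof.
rewrite /walsh2 /walsh -big_split -sumrB !big_distrlr -big_split mulr_sumr.
apply: eq_bigr => x _; rewrite mulr_sumr -big_split; apply: eq_bigr => y _.
exact: pw.
Qed.
Lemma absE (x : int) (n : nat) : `|x| = n%:Z -> x = n%:Z \/ x = - n%:Z.
Proof. move=> H; lia. Qed.
Lemma disj k (A B : vec k -> bool) w : [disjoint wsupp A & wsupp B] -> walsh A w = 0 \/ walsh B w = 0.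
Proof.
move=> D; case: (boolP (w \in wsupp A)) => HA.
  by right; move: (disjointFr D HA); rewrite inE => /negbFE/eqP.
by left; move: HA; rewrite inE => /negPn/eqP.
Qed.
Lemma L1 (W p q w00 w01 w10 w11 g1 g2 : int) :
  2*W = (w00+w01)*g2 + (w10-w11)*g1 -> (g1 = q \/ g1 = -q) -> (g2 = q \/ g2 = -q) ->
  (w00 = p \/ w00 = -p) -> (w01 = p \/ w01 = -p) -> (w10 = p \/ w10 = -p) -> (w11 = p \/ w11 = -p) ->
  W = 0 \/ W = p* q \/ W = -(p* q) \/ W = 2*(p* q) \/ W = -(2*(p* q)).
Proof.
move=> E [] ? [] ? [] ? [] ? [] ? [] ?; subst; nia.
Qed.
Lemma L2 (W p q w00 w01 w10 w11 g1 g2 : int) :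
  2*W = (w00+w01)*g2 + (w10-w11)*g1 -> (g1 = q \/ g1 = -q) -> (g2 = q \/ g2 = -q) ->
  (w00 = 0 \/ w00 = 4* p \/ w00 = -(4* p)) -> (w01 = 0 \/ w01 = 2* p \/ w01 = -(2* p)) ->
  (w10 = 0 \/ w10 = 2* p \/ w10 = -(2* p)) -> (w11 = 0 \/ w11 = 2* p \/ w11 = -(2* p)) ->
  (w00 = 0 \/ w01 = 0) -> (w00 = 0 \/ w10 = 0) -> (w00 = 0 \/ w11 = 0) ->
  (w01 = 0 \/ w10 = 0) -> (w01 = 0 \/ w11 = 0) -> (w10 = 0 \/ w11 = 0) ->
  W = 0 \/ W = p* q \/ W = -(p* q) \/ W = 2*(p* q) \/ W = -(2*(p* q)).
Proof.
move=> E [] ? [] ? [|[|]] ? [|[|]] ? [|[|]] ? [|[|]] ?; subst; move=> *; nia.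
Qed.
Theorem mainTheorem9 (r m : nat) (a h1 h2 : vec r -> bool) (g1 g2 : vec m -> bool) :
  ~~ odd r -> ~~ odd m ->
  ((forall c1 c2 : bool, bent (comb a h1 h2 c1 c2)) -> bent g1 -> bent g2 ->
     forall (u : vec r) (v : vec m),
       five_valued (r + m) (walsh2 (frakf a h1 h2 g1 g2) u v))
  /\
  ((6 <= r)%N ->
   plateaued 4 a ->
   (forall c1 c2 : bool, (c1 || c2) -> plateaued 2 (comb a h1 h2 c1 c2)) ->
   (forall c1 c2 d1 d2 : bool, (c1, c2) != (d1, d2) ->
      [disjoint wsupp (comb a h1 h2 c1 c2) & wsupp (comb a h1 h2 d1 d2)]) ->
   bent g1 -> bent g2 ->
   forall (u : vec r) (v : vec m),
     five_valued (r + m) (walsh2 (frakf a h1 h2 g1 g2) u v)).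
Proof.
move=> hr hm.
have r2 : (r %% 2 = 0)%N by rewrite modn2 (negbTE hr).
have m2 : (m %% 2 = 0)%N by rewrite modn2 (negbTE hm).
set p : int := (2 ^ (r %/ 2))%:Z.
set q : int := (2 ^ (m %/ 2))%:Z.
have e1 : (2 ^ ((r + m) %/ 2))%:Z = p * q.
  by rewrite /p /q -PoszM -expnD; congr (Posz (2 ^ _)); lia.
have e2 : (2 ^ ((r + m + 2) %/ 2))%:Z = 2 * (p * q).
  rewrite (_ : ((r + m + 2) %/ 2 = ((r + m) %/ 2).+1)%N); last by lia.
  by rewrite expnS PoszM e1.
have e4 : (2 ^ ((r + 4) %/ 2))%:Z = 4 * p.
  rewrite (_ : ((r + 4) %/ 2 = (r %/ 2).+2)%N); last by lia.
  rewrite !expnS !PoszM /p; lia.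
have e3 : (2 ^ ((r + 2) %/ 2))%:Z = 2 * p.
  rewrite (_ : ((r + 2) %/ 2 = (r %/ 2).+1)%N); last by lia.
  by rewrite !expnS !PoszM /p.
split.
  move=> Hc Hg1 Hg2 u v; rewrite /five_valued e1 e2.
  apply: (L1 _ _ _ _ _ _ _ _ _ (@decomp _ _ a h1 h2 g1 g2 u v)); apply: absE.
  - exact: Hg1. - exact: Hg2. - exact: Hc. - exact: Hc. - exact: Hc. - exact: Hc.
move=> _ Ha Hc Hd Hg1 Hg2 u v; rewrite /five_valued e1 e2.
have Wa : walsh (comb a h1 h2 false false) u = walsh a u.
  by rewrite /walsh; apply: eq_bigr => x _; rewrite /comb /=; case: (a x).
apply: (L2 _ _ _ _ _ _ _ _ _ (@decomp _ _ a h1 h2 g1 g2 u v)).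
- by apply: absE; apply: Hg1.
- by apply: absE; apply: Hg2.
- by rewrite Wa -e4; apply: Ha.
- by rewrite -e3; apply: Hc.
- by rewrite -e3; apply: Hc.
- by rewrite -e3; apply: Hc.
all: by apply: disj; apply: Hd.
Qed.
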